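(* In the setting described in the context, for every $i$ with $1\le i\le m-1$, $L_2(f_i)\le L_1(p_i,q_i)+L_1(q_i,p_{i+1})$, where $L_1$ is the $L_1$ distance and $L_2(f_i)$ is the Euclidean length of the phase $f_i$.
   Context: $P$ is a finite set of points in the plane, $s,t\in P$ distinct, and coordinates are chosen so that $t=(0,0)$ and $s$ lies in $C_2^t$ below the line $\ell_t^-=\{x+y=0\}$. Cones: $C_0^v=\{x\ge v_x,y\le v_y\}$, $C_1^v=\{x\ge v_x,y\ge v_y\}$, $C_2^v=\{x\le v_x,y\ge v_y\}$, $C_3^v=\{x\le v_x,y\le v_y\}$ with bisector directions $(1,-1),(1,1),(-1,1),(-1,-1)$. The $\Theta_4$-graph of $P$ has, for each $v\in P$ and cone $C_i^v$ containing a point of $P\setminus\{v\}$, a directed edge from $v$ to a point $w$ of $(P\setminus\{v\})\cap C_i^v$ minimizing the projection of $w-v$ onto the bisector direction (the neighbour of $v$ in $C_i^v$). Algorithm: for a vertex $v$, let $T(v,\ell_t^-)=C_1^v\cap\{x+y\le0\}$ if $v_x+v_y<0$, $T(v,\ell_t^-)=C_3^v\cap\{x+y\ge0\}$ if $v_x+v_y>0$, and $\{v\}$ if $v_x+v_y=0$; $v$ is clean if $T(v,\ell_t^-)$ contains no point of $P$ other than $v$. Starting at $v=s$, while $v\ne t$: if $v$ is not clean, take a sweeping step (go to the neighbour of $v$ in $C_1^v$, resp. $C_3^v$); otherwise take a greedy step (go to the neighbour of $v$ in the cone $C_i^v$ containing $t$). Let $(p_1,q_1),\dots,(p_{m-1},q_{m-1})$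 be, in order, the edges traversed by greedy steps, and set $p_m=t$. The phase $f_i$ ($1\le i\le m-1$) is the subpath of the algorithm's path from $p_i$ to $p_{i+1}$. *)

(* Defs.v *)
From mathcomp Require Import all_boot all_order all_algebra.
From mathcomp Require Import reals.
Set Implicit Arguments. Unset Strict Implicit. Unset Printing Implicit Defensive.
Import Order.TTheory GRing.Theory Num.Theory.
Local Open Scope ring_scope.

Section Theta4.
Variable R : realType.
Definition pt := (R * R)%type.

Definition inCone (i : nat) (v w : pt) : bool :=
  match i with
  | 0%N => (v.1 <= w.1) && (w.2 <= v.2)
  | 1%N => (v.1 <= w.1) && (v.2 <= w.2)
  | 2%N => (w.1 <= v.1) && (v.2 <= w.2)
  | _ => (w.1 <= v.1) && (w.2 <= v.2)
  end.

(* Projection of w - v onto the (unnormalised) bisector direction of C_i: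
   (1,-1), (1,1), (-1,1), (-1,-1).  Normalisation does not affect the argmin. *)
Definition bproj (i : nat) (v w : pt) : R :=
  match i with
  | 0%N => (w.1 - v.1) - (w.2 - v.2)
  | 1%N => (w.1 - v.1) + (w.2 - v.2)
  | 2%N => - (w.1 - v.1) + (w.2 - v.2)
  | _ => - (w.1 - v.1) - (w.2 - v.2)
  end.

(* nb is a Theta_4-graph of P: for every v in P and cone i < 4 containing
   a point of P other than v, nb v i is such a point minimising bproj. *)
Definition theta4_nb (P : seq pt) (nb : pt -> nat -> pt) : Prop :=
  forall v i, v \in P -> (i < 4)%N ->
    (exists w, [/\ w \in P, w != v & inCone i v w]) ->
    [/\ nb v i \in P, nb v i != v, inCone i v (nb v i) &
        forall w, w \in P -> w != v -> inCone i v w ->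
          bproj i v (nb v i) <= bproj i v w].

(* Membership of w in T(v, l_t^-) (with t = (0,0), l_t^- = {x + y = 0}). *)
Definition inT (v w : pt) : bool :=
  if v.1 + v.2 < 0 then inCone 1 v w && (w.1 + w.2 <= 0)
  else if 0 < v.1 + v.2 then inCone 3 v w && (0 <= w.1 + w.2)
  else w == v.

Definition clean (P : seq pt) (v : pt) : bool :=
  all (fun w => (w == v) || ~~ inT v w) P.

Definition sweepCone (v : pt) : nat := if v.1 + v.2 < 0 then 1%N else 3%N.

Definition algStep (P : seq pt) (nb : pt -> nat -> pt) (t v w : pt) : Prop :=
  if clean P v then exists2 i, (i < 4)%N & inCone i v t /\ w = nb v i
  else w = nb v (sweepCone v).

Definition algPath (P : seq pt) (nb : pt -> nat -> pt) (s t : pt) (path : seq pt) :=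
  [/\ (0 < size path)%N, nth t path 0 = s, nth t path (size path).-1 = t,
      (forall j, (j < (size path).-1)%N -> nth t path j != t) &
      (forall j, (j < (size path).-1)%N ->
         algStep P nb t (nth t path j) (nth t path j.+1))].

Definition L1dist (u v : pt) : R := `|u.1 - v.1| + `|u.2 - v.2|.
Definition L2dist (u v : pt) : R := Num.sqrt ((u.1 - v.1) ^+ 2 + (u.2 - v.2) ^+ 2).

Definition subpathL2 (d : pt) (path : seq pt) (j k : nat) : R :=
  \sum_(j <= l < k) L2dist (nth d path l) (nth d path l.+1).

Definition greedyIdx (P : seq pt) (d : pt) (path : seq pt) (j : nat) : bool :=
  (j < (size path).-1)%N && clean P (nth d path j).

End Theta4.

(* Main.v *)
Require Import Defs.
From mathcomp Require Import all_boot all_order all_algebra reals lra zify.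
Import Order.TTheory GRing.Theory Num.Theory.
Local Open Scope ring_scope.
Set Implicit Arguments. Unset Strict Implicit.

Section S.
Variable R : realType.
Variable P : seq (pt R).
Variable nb : pt R -> nat -> pt R.
Hypothesis hnb : theta4_nb P nb.

Lemma clean0 (v : pt R) : v.1 + v.2 = 0 -> clean P v.
Proof.
move=> h; apply/allP => w _; rewrite /inT h ltxx.
by case: (w == v).
Qed.

Lemma sweepCone13 (v : pt R) : (sweepCone v = 1 \/ sweepCone v = 3)%N.
Proof. by rewrite /sweepCone; case: ifP; [left|right]. Qed.

Lemma notclean_info (v : pt R) : ~~ clean P v -> exists w,
  [/\ w \in P, w != v, inCone (sweepCone v) v w &
   (if v.1 + v.2 < 0 then w.1 + w.2 <= 0 else (0 < v.1 + v.2) && (0 <= w.1 + w.2))].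
Proof.
case/allPn => w wP /norP [nw /negbNE hT].
exists w; split => //; move: hT; rewrite /inT /sweepCone.
- by case: ifP => _; [case/andP|case: ifP => _; [case/andP| move/eqP => E; rewrite E eqxx in nw]].
- case: ifP => _; [by case/andP|].
  case: ifP => hp; [by case/andP => _ ->|].
  by move/eqP => E; rewrite E eqxx in nw.
Qed.

Lemma sweep_step (v : pt R) : v \in P -> ~~ clean P v ->
  let w := nb v (sweepCone v) in
  [/\ w \in P, inCone (sweepCone v) v w &
   (if v.1 + v.2 < 0 then w.1 + w.2 <= 0 else (0 < v.1 + v.2) && (0 <= w.1 + w.2))].
Proof.
move=> vP nc /=.
have [w [wP nw cw hw]] := notclean_info nc.
have lt4 : (sweepCone v < 4)%N by case: (sweepCone13 v) => ->.
have [h1 h2 h3 h4] := hnb vP lt4 (ex_intro _ w (And3 wP nw cw)).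
split => //.
have := h4 w wP nw cw; move: hw; rewrite /sweepCone /bproj.
case: ifP => hn /=; first lra.
case/andP => hp hw; rewrite hp /=; lra.
Qed.

Lemma sweep_same (v : pt R) : v \in P -> ~~ clean P v ->
  ~~ clean P (nb v (sweepCone v)) ->
  sweepCone (nb v (sweepCone v)) = sweepCone v.
Proof.
move=> vP nc nc2.
have [_ _ hw] := sweep_step vP nc.
have n0 : (nb v (sweepCone v)).1 + (nb v (sweepCone v)).2 != 0.
  by apply/eqP => E; rewrite clean0 in nc2.
move: hw n0; set w := nb v (sweepCone v).
rewrite /sweepCone; case: ifP => hn.
  by move=> h n0; have -> : w.1 + w.2 < 0 by rewrite lt_neqAle n0.
case/andP => hp h n0.
by have -> : (w.1 + w.2 < 0) = false by apply/negbTE; rewrite -leNgt.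
Qed.

Lemma path_inP s t path : s \in P -> t \in P -> algPath P nb s t path ->
  forall l, (l < size path)%N -> nth t path l \in P.
Proof.
move=> sP tP [h0 hs ht hne hst].
elim=> [|l IH] hl; first by rewrite hs.
have hl' : (l < (size path).-1)%N by move: hl; case: (size path).
have vP := IH (ltnW hl).
have := hst l hl'; rewrite /algStep.
case: ifP => hc.
  case=> i i4 [ci ->].
  have tn : t != nth t path l by rewrite eq_sym; exact: hne.
  by case: (hnb vP i4 (ex_intro _ t (And3 tP tn ci))).
move=> ->; have [] := sweep_step vP (negbT hc) => //.
Qed.


Lemma L2_le_L1 (a b : pt R) : L2dist a b <= L1dist a b.
Proof.
rewrite /L2dist /L1dist.
set x := a.1 - b.1; set y := a.2 - b.2.
have h : `|x| + `|y| = Num.sqrt ((`|x| + `|y|) ^+ 2).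
  by rewrite sqrtr_sqr (ger0_norm (addr_ge0 (normr_ge0 x) (normr_ge0 y))).
rewrite [X in _ <= X]h ler_sqrt ?sqr_ge0 //.
have hx : x ^+ 2 = `|x| ^+ 2 by rewrite real_normK ?num_real.
have hy : y ^+ 2 = `|y| ^+ 2 by rewrite real_normK ?num_real.
rewrite hx hy sqrrD -addrA lerD2l lerDr.
by rewrite mulrn_wge0 // mulr_ge0.
Qed.

Lemma L1_chain (c : nat) (a b d : pt R) :
  (c = 1 \/ c = 3)%N -> inCone c a b -> inCone c b d ->
  L1dist a d = L1dist a b + L1dist b d.
Proof.
move=> hc.
have e1 : forall u v : R, u <= v -> `|u - v| = v - u.
  by move=> u v h; rewrite distrC ger0_norm ?subr_ge0.
have e2 : forall u v : R, v <= u -> `|u - v| = u - v.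
  by move=> u v h; rewrite ger0_norm ?subr_ge0.
rewrite /L1dist /inCone; case: hc => ->; move=>/andP[h1 h2] /andP[h3 h4].
- rewrite (e1 _ _ h1) (e1 _ _ h2) (e1 _ _ h3) (e1 _ _ h4) (e1 _ _ (le_trans h1 h3)) (e1 _ _ (le_trans h2 h4)); lra.
- rewrite (e2 _ _ h1) (e2 _ _ h2) (e2 _ _ h3) (e2 _ _ h4) (e2 _ _ (le_trans h3 h1)) (e2 _ _ (le_trans h4 h2)); lra.
Qed.

Lemma inCone_trans (c : nat) (a b d : pt R) :
  (c = 1 \/ c = 3)%N -> inCone c a b -> inCone c b d -> inCone c a d.
Proof.
rewrite /inCone; case=> ->; move=>/andP[h1 h2] /andP[h3 h4]; apply/andP; split;
  by apply: le_trans; eassumption.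
Qed.

End S.

Theorem mainTheorem7 (R : realType) (P : seq (pt R)) (nb : pt R -> nat -> pt R)
    (s t : pt R) (path : seq (pt R)) :
  uniq P -> s \in P -> t \in P -> s != t ->
  t = (0, 0) ->
  s.1 <= 0 -> 0 <= s.2 -> s.1 + s.2 < 0 ->
  theta4_nb P nb ->
  algPath P nb s t path ->
  forall j k : nat,
    greedyIdx P t path j ->
    (j < k)%N -> (k <= (size path).-1)%N ->
    (forall l, (j < l < k)%N -> ~~ greedyIdx P t path l) ->
    (greedyIdx P t path k || (k == (size path).-1)) ->
    subpathL2 t path j k <=
      L1dist (nth t path j) (nth t path j.+1) + L1dist (nth t path j.+1) (nth t path k).
Proof.
move=> uP sP tP st t0 _ _ _ hnb hpath j k gj jk ksz hng gk.
have inP := path_inP hnb sP tP hpath.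
have [h0 hs ht hne hst] := hpath.
set q := nth t path j.+1; set c := sweepCone q.
have c13 : (c = 1 \/ c = 3)%N by apply: sweepCone13.
have nclean : forall l, (j < l < k)%N ->
    ~~ clean P (nth t path l) /\ (l < (size path).-1)%N.
  move=> l hl; have := hng l hl; rewrite /greedyIdx.
  have ll : (l < (size path).-1)%N by lia.
  by rewrite ll /=.
have key : forall n, (j.+1 + n <= k)%N ->
  [/\ inCone c q (nth t path (j.+1 + n)),
      \sum_(j.+1 <= l < j.+1 + n) L2dist (nth t path l) (nth t path l.+1)
        <= L1dist q (nth t path (j.+1 + n)) &
      ((j.+1 + n < k)%N -> sweepCone (nth t path (j.+1 + n)) = c)].
  elim=> [|n IH] hn.
    rewrite addn0 big_geq //; split => //.
      by case: c13 => ->; rewrite /inCone !lexx.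
    by rewrite /L1dist addr_ge0.
  have hn' : (j.+1 + n <= k)%N by lia.
  have [IH1 IH2 IH3] := IH hn'.
  set l := (j.+1 + n)%N.
  have hl : (j < l < k)%N by lia.
  have [ncl lsz] := nclean l hl.
  have aP : nth t path l \in P by apply: inP; lia.
  have hc : sweepCone (nth t path l) = c by apply: IH3; lia.
  have := hst l lsz; rewrite /algStep (negbTE ncl) => hb.
  have cb : inCone c (nth t path l) (nth t path l.+1).
    by have [_ cb' _] := sweep_step hnb aP ncl; rewrite hb -hc.
  rewrite addnS big_nat_recr /=; last by rewrite leq_addr.
  split.
  - exact: inCone_trans c13 IH1 cb.
  - rewrite (L1_chain c13 IH1 cb); apply: lerD => //; exact: L2_le_L1.
  - move=> hl2.
    have hl3 : (j < l.+1 < k)%N by lia.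
    have [ncl2 _] := nclean l.+1 hl3.
    have ncb : ~~ clean P (nb (nth t path l) (sweepCone (nth t path l))) by rewrite -hb.
    by rewrite -hc hb; exact: (sweep_same hnb aP ncl ncb).
rewrite /subpathL2 big_ltn //.
have hk : (j.+1 + (k - j.+1) <= k)%N by lia.
have [_ H _] := key (k - j.+1)%N hk.
rewrite subnKC // in H.
apply: lerD => //; exact: L2_le_L1.
Qed.
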